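(* Let $\mathcal I$ index a finite set of strategies for the iterated Prisoner's Dilemma (payoffs normalized with $T=1$, $S=0$). (a) Suppose the strategy indexed by $i^*$ is a memory-one vector $\mathbf p^{i^*}=(p_1,p_2,0,0)$ with $p_1,p_2<1$, together with any initial play. If for no other $j\in\mathcal I$ is $\mathbf p^j$ firm, then $i^*$ is an ESS for the game $\{A_{ij}\}$. (b) Suppose the strategy indexed by $i^*$ is a memory-one vector $\mathbf p^{i^*}=(1,p_2,0,0)$ with $p_2<1$, together with any initial play. If for no other $j\in\mathcal I$ is $\mathbf p^j$ either agreeable or firm, then $i^*$ is an ESS for the game $\{A_{ij}\}$. (c) Assume $P<\tfrac12$. Suppose the strategy indexed by $i^*$ is a firm, non-exceptional zero-determinant strategy with $\bar\alpha<0$, together with any initial play. If for no other $j\in\mathcal I$ is $\mathbf p^j$ firm, then $i^*$ is an ESS for the game $\{A_{ij}\}$.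
   Context: Iterated Prisoner's Dilemma with normalized payoffs $T=1>R>P>S=0$, $2R>1$; outcomes ordered $cc,cd,dc,dd$ (own play first); payoff vectors $\mathbf S_X=(R,0,1,P)$, $\mathbf S_Y=(R,1,0,P)$, $\mathbf 1=(1,1,1,1)$, $\mathbf e_{23}=(0,1,1,0)$. A memory-one strategy vector is $\mathbf p\in[0,1]^4$, $p_i$ being the probability of playing $c$ after the $i$-th outcome, outcomes labeled from the player's own perspective; it is agreeable if $p_1=1$ and firm if $p_4=0$. A strategy is such a vector together with an initial play. Its X Press-Dyson vector $\mathbf p-(1,1,0,0)$ decomposes uniquely as $\alpha\mathbf S_X+\beta\mathbf S_Y+\gamma\mathbf 1+\delta\mathbf e_{23}$; $\mathbf p$ is a non-exceptional zero-determinant strategy if $\delta=0$ and $\gamma>0$, and then $\bar\alpha=\alpha/\gamma$. For $i,j\in\mathcal I$, $A_{ij}$ is the long-run (Cesàro-limit) average payoff of X when X uses strategy $i$ and Y uses strategy $j$. $i^*$ is an evolutionarily stable strategy (ESS) if $A_{ji^*}<A_{i^*i^*}$ for all $j\ne i^*$. *)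

(* Defs.v *)
From Stdlib Require Import Reals List.
From Coquelicot Require Import Coquelicot.
Open Scope R_scope.

(* Outcomes of one round, from a given player's own perspective
   (own play first): cc, cd, dc, dd. *)
Inductive outcome := CC | CD | DC | DD.

Definition swap (o : outcome) : outcome :=
  match o with CD => DC | DC => CD | o => o end.

Definition own_play (o : outcome) : bool :=
  match o with CC | CD => true | _ => false end.
Definition other_play (o : outcome) : bool :=
  match o with CC | DC => true | _ => false end.
Definition mk_outcome (x y : bool) : outcome :=
  match x, y with
  | true, true => CC | true, false => CD | false, true => DC | false, false => DD end.

Definition sum4 (f : outcome -> R) : R := f CC + f CD + f DC + f DD.

(* A memory-one strategy vector p = (p_1,p_2,p_3,p_4), p o = probability of
   playing c after outcome o (own perspective). *)
Definition mem1 := outcome -> R.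
Definition valid_mem1 (p : mem1) : Prop := forall o, 0 <= p o <= 1.

Record strategy := Strat { vec : mem1 ; init : bool }.

Definition agreeable (p : mem1) : Prop := p CC = 1.
Definition firm (p : mem1) : Prop := p DD = 0.

Definition SX (Rr Pp : R) (o : outcome) : R :=
  match o with CC => Rr | CD => 0 | DC => 1 | DD => Pp end.
(* Payoff vector of Y seen in X's outcome labels: S_Y = (R,1,0,P). *)
Definition SY (Rr Pp : R) (o : outcome) : R :=
  match o with CC => Rr | CD => 1 | DC => 0 | DD => Pp end.
Definition one4 (o : outcome) : R := 1.
Definition e23 (o : outcome) : R :=
  match o with CD | DC => 1 | _ => 0 end.

Definition prob_play (b : bool) (pr : R) : R := if b then pr else 1 - pr.

(* Markov chain on outcomes (labelled from X's perspective) when X uses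
   vector p and Y uses vector q. *)
Definition trans (p q : mem1) (s t : outcome) : R :=
  prob_play (own_play t) (p s) * prob_play (other_play t) (q (swap s)).

Fixpoint dist (p q : mem1) (x0 y0 : bool) (n : nat) (t : outcome) : R :=
  match n with
  | O => if (match mk_outcome x0 y0, t with
             | CC, CC | CD, CD | DC, DC | DD, DD => true | _, _ => false end)
         then 1 else 0
  | S m => sum4 (fun s => dist p q x0 y0 m s * trans p q s t)
  end.

Definition round_payoff (Rr Pp : R) (X Y : strategy) (n : nat) : R :=
  sum4 (fun s => dist (vec X) (vec Y) (init X) (init Y) n s * SX Rr Pp s).

Definition cesaro (Rr Pp : R) (X Y : strategy) (n : nat) : R :=
  sum_f_R0 (round_payoff Rr Pp X Y) n / INR (S n).

Definition longrun (Rr Pp : R) (X Y : strategy) : R :=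
  real (Lim_seq (cesaro Rr Pp X Y)).

Definition Amat {I : Type} (Rr Pp : R) (st : I -> strategy) (i j : I) : R :=
  longrun Rr Pp (st i) (st j).

Definition ESS {I : Type} (A : I -> I -> R) (istar : I) : Prop :=
  forall j, j <> istar -> A j istar < A istar istar.

Definition PD_decomp (Rr Pp : R) (p : mem1) (a b g d : R) : Prop :=
  forall o, p o - (match o with CC | CD => 1 | _ => 0 end)
            = a * SX Rr Pp o + b * SY Rr Pp o + g * one4 o + d * e23 o.

(* Non-exceptional ZD strategy (delta = 0, gamma > 0) with alpha-bar < 0. *)
Definition nonexc_ZD_neg_alphabar (Rr Pp : R) (p : mem1) : Prop :=
  exists a b g, PD_decomp Rr Pp p a b g 0 /\ 0 < g /\ a / g < 0.

Definition PD_params (Rr Pp : R) : Prop :=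
  0 < Pp /\ Pp < Rr /\ Rr < 1 /\ 2 * Rr > 1.

Definition finite_index (I : Type) : Prop := exists l : list I, forall i, In i l.

(* Main.v *)
Require Import Defs.
From Stdlib Require Import Reals Lra Lia Psatz List.
From Coquelicot Require Import Coquelicot.
Open Scope R_scope.

Lemma lim_invS (K : R) : is_lim_seq (fun n => K / INR (S n)) 0.
Proof.
  assert (H : is_lim_seq (fun n => / INR (S n)) 0).
  { apply (is_lim_seq_incr_1 (fun n => / INR n)).
    replace (Finite 0) with (Rbar_inv p_infty) by reflexivity.
    apply is_lim_seq_inv. apply is_lim_seq_INR. discriminate. }
  apply is_lim_seq_scal_l with (a := K) in H.
  replace (Rbar_mult K 0) with (Finite 0) in H by (simpl; f_equal; ring).
  eapply is_lim_seq_ext; [|exact H]. intro n; unfold Rdiv; ring.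
Qed.

Lemma lim_bounds (u : nat -> R) (M : R) :
  (forall n, 0 <= u n <= M) -> Rbar_le 0 (Lim_seq u) /\ Rbar_le (Lim_seq u) M.
Proof.
  intro H. split.
  - rewrite <- (Lim_seq_const 0). apply Lim_seq_le_loc. exists O; intros; apply H.
  - rewrite <- (Lim_seq_const M). apply Lim_seq_le_loc. exists O; intros; apply H.
Qed.

Lemma lim_le (u : nat -> R) (M L K : R) :
  (forall n, 0 <= u n <= M) -> (forall n, u n <= L + K / INR (S n)) ->
  real (Lim_seq u) <= L.
Proof.
  intros Hb Hu.
  assert (Hl : Lim_seq (fun n => L + K / INR (S n)) = L).
  { apply is_lim_seq_unique.
    assert (H := is_lim_seq_plus' _ _ _ _ (is_lim_seq_const L) (lim_invS K)).
    rewrite Rplus_0_r in H. exact H. }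
  assert (H1 : Rbar_le (Lim_seq u) (Lim_seq (fun n => L + K / INR (S n)))).
  { apply Lim_seq_le_loc. exists O; intros; apply Hu. }
  rewrite Hl in H1. destruct (lim_bounds u M Hb) as [H2 H3].
  destruct (Lim_seq u); simpl in *; try contradiction; lra.
Qed.

Lemma lim_ge (u : nat -> R) (M L K : R) :
  (forall n, 0 <= u n <= M) -> (forall n, L - K / INR (S n) <= u n) ->
  L <= real (Lim_seq u).
Proof.
  intros Hb Hu.
  assert (Hl : Lim_seq (fun n => L - K / INR (S n)) = L).
  { apply is_lim_seq_unique.
    assert (H := is_lim_seq_plus' _ _ _ _ (is_lim_seq_const L) (lim_invS (-K))).
    rewrite Rplus_0_r in H. eapply is_lim_seq_ext; [|exact H].
    intro; unfold Rdiv; ring. }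
  assert (H1 : Rbar_le (Lim_seq (fun n => L - K / INR (S n))) (Lim_seq u)).
  { apply Lim_seq_le_loc. exists O; intros; apply Hu. }
  rewrite Hl in H1. destruct (lim_bounds u M Hb) as [H2 H3].
  destruct (Lim_seq u); simpl in *; try contradiction; lra.
Qed.

Lemma prob_bnd b pr : 0 <= pr <= 1 -> 0 <= prob_play b pr <= 1.
Proof. destruct b; simpl; lra. Qed.

Lemma trans_bnd p q s t : valid_mem1 p -> valid_mem1 q -> 0 <= trans p q s t <= 1.
Proof.
  intros Hp Hq. unfold trans.
  destruct (prob_bnd (own_play t) (p s) (Hp s)).
  destruct (prob_bnd (other_play t) (q (swap s)) (Hq (swap s))).
  split. apply Rmult_le_pos; auto.
  replace 1 with (1*1) by ring. apply Rmult_le_compat; auto.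
Qed.

Lemma trans_sum p q s : sum4 (trans p q s) = 1.
Proof. unfold sum4, trans; simpl; ring. Qed.

Lemma dist_ok p q x0 y0 k : valid_mem1 p -> valid_mem1 q ->
  (forall t, 0 <= Defs.dist p q x0 y0 k t) /\ sum4 (Defs.dist p q x0 y0 k) = 1.
Proof.
  intros Hp Hq. induction k as [|k [IH1 IH2]].
  - split. intro t; destruct x0, y0, t; simpl; lra.
    unfold sum4; destruct x0, y0; simpl; lra.
  - split.
    + intro t. simpl. unfold sum4.
      pose proof (trans_bnd p q CC t Hp Hq). pose proof (trans_bnd p q CD t Hp Hq).
      pose proof (trans_bnd p q DC t Hp Hq). pose proof (trans_bnd p q DD t Hp Hq).
      pose proof (IH1 CC). pose proof (IH1 CD). pose proof (IH1 DC). pose proof (IH1 DD).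
      repeat apply Rplus_le_le_0_compat; apply Rmult_le_pos; lra.
    + set (D := Defs.dist p q x0 y0 k).
      change (sum4 (fun t => sum4 (fun s => D s * trans p q s t)) = 1).
      transitivity (D CC * sum4 (trans p q CC) + D CD * sum4 (trans p q CD)
                   + D DC * sum4 (trans p q DC) + D DD * sum4 (trans p q DD)).
      unfold sum4; ring.
      rewrite !trans_sum. unfold sum4 in IH2. fold D in IH2. lra.
Qed.

Lemma dist_step_ge p q x0 y0 k s t : valid_mem1 p -> valid_mem1 q ->
  Defs.dist p q x0 y0 k s * trans p q s t <= Defs.dist p q x0 y0 (S k) t.
Proof.
  intros Hp Hq. destruct (dist_ok p q x0 y0 k Hp Hq) as [H1 _].
  simpl. unfold sum4.
  pose proof (trans_bnd p q CC t Hp Hq). pose proof (trans_bnd p q CD t Hp Hq).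
  pose proof (trans_bnd p q DC t Hp Hq). pose proof (trans_bnd p q DD t Hp Hq).
  pose proof (H1 CC). pose proof (H1 CD). pose proof (H1 DC). pose proof (H1 DD).
  assert (0 <= Defs.dist p q x0 y0 k CC * trans p q CC t) by (apply Rmult_le_pos; lra).
  assert (0 <= Defs.dist p q x0 y0 k CD * trans p q CD t) by (apply Rmult_le_pos; lra).
  assert (0 <= Defs.dist p q x0 y0 k DC * trans p q DC t) by (apply Rmult_le_pos; lra).
  assert (0 <= Defs.dist p q x0 y0 k DD * trans p q DD t) by (apply Rmult_le_pos; lra).
  destruct s; lra.
Qed.

Lemma coopX p q x0 y0 k :
  sum4 (fun s => Defs.dist p q x0 y0 k s * p s)
  = Defs.dist p q x0 y0 (S k) CC + Defs.dist p q x0 y0 (S k) CD.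
Proof. simpl. unfold sum4, trans; simpl; ring. Qed.

Lemma coopY p q x0 y0 k :
  sum4 (fun s => Defs.dist p q x0 y0 k s * q (swap s))
  = Defs.dist p q x0 y0 (S k) CC + Defs.dist p q x0 y0 (S k) DC.
Proof. simpl. unfold sum4, trans; simpl; ring. Qed.

Definition Ssum p q x0 y0 n s := sum_f_R0 (fun k => Defs.dist p q x0 y0 k s) n.

Lemma Ssum_nonneg p q x0 y0 n s : valid_mem1 p -> valid_mem1 q -> 0 <= Ssum p q x0 y0 n s.
Proof.
  intros Hp Hq. unfold Ssum. induction n; simpl.
  - apply (dist_ok p q x0 y0 0 Hp Hq).
  - pose proof (proj1 (dist_ok p q x0 y0 (S n) Hp Hq) s). simpl in H. lra.
Qed.

Lemma Ssum_total p q x0 y0 n : valid_mem1 p -> valid_mem1 q ->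
  Ssum p q x0 y0 n CC + Ssum p q x0 y0 n CD + Ssum p q x0 y0 n DC + Ssum p q x0 y0 n DD
  = INR (S n).
Proof.
  intros Hp Hq. unfold Ssum. induction n.
  - simpl. pose proof (proj2 (dist_ok p q x0 y0 0 Hp Hq)). unfold sum4 in H. simpl in H. lra.
  - rewrite S_INR. rewrite <- IHn. pose proof (proj2 (dist_ok p q x0 y0 (S n) Hp Hq)).
    unfold sum4 in H. change (sum_f_R0 ?f (S n)) with (sum_f_R0 f n + f (S n)). lra.
Qed.

Lemma telX p q x0 y0 n :
  sum4 (fun s => Ssum p q x0 y0 n s * p s) - (Ssum p q x0 y0 n CC + Ssum p q x0 y0 n CD)
  = (Defs.dist p q x0 y0 (S n) CC + Defs.dist p q x0 y0 (S n) CD)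
    - (Defs.dist p q x0 y0 0 CC + Defs.dist p q x0 y0 0 CD).
Proof.
  unfold Ssum. induction n.
  - change (sum_f_R0 ?f O) with (f O). cbv beta. rewrite <- coopX. unfold sum4; ring.
  - change (sum_f_R0 ?f (S n)) with (sum_f_R0 f n + f (S n)).
    pose proof (coopX p q x0 y0 (S n)). unfold sum4 in *. lra.
Qed.

Lemma telY p q x0 y0 n :
  sum4 (fun s => Ssum p q x0 y0 n s * q (swap s)) - (Ssum p q x0 y0 n CC + Ssum p q x0 y0 n DC)
  = (Defs.dist p q x0 y0 (S n) CC + Defs.dist p q x0 y0 (S n) DC)
    - (Defs.dist p q x0 y0 0 CC + Defs.dist p q x0 y0 0 DC).
Proof.
  unfold Ssum. induction n.
  - change (sum_f_R0 ?f O) with (f O). cbv beta. rewrite <- coopY. unfold sum4; ring.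
  - change (sum_f_R0 ?f (S n)) with (sum_f_R0 f n + f (S n)).
    pose proof (coopY p q x0 y0 (S n)). unfold sum4 in *. lra.
Qed.

Lemma two_bnd p q x0 y0 k a b : valid_mem1 p -> valid_mem1 q -> a <> b ->
  0 <= Defs.dist p q x0 y0 k a + Defs.dist p q x0 y0 k b <= 1.
Proof.
  intros Hp Hq Hab. destruct (dist_ok p q x0 y0 k Hp Hq) as [H1 H2]. unfold sum4 in H2.
  pose proof (H1 CC). pose proof (H1 CD). pose proof (H1 DC). pose proof (H1 DD).
  destruct a, b; try congruence; lra.
Qed.

Lemma IX p q x0 y0 n : valid_mem1 p -> valid_mem1 q ->
  Rabs (Ssum p q x0 y0 n CC * p CC + Ssum p q x0 y0 n CD * p CD
        + Ssum p q x0 y0 n DC * p DC + Ssum p q x0 y0 n DD * p DD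
        - (Ssum p q x0 y0 n CC + Ssum p q x0 y0 n CD)) <= 1.
Proof.
  intros Hp Hq. pose proof (telX p q x0 y0 n). unfold sum4 in H.
  rewrite H. pose proof (two_bnd p q x0 y0 (S n) CC CD Hp Hq ltac:(discriminate)).
  pose proof (two_bnd p q x0 y0 0 CC CD Hp Hq ltac:(discriminate)).
  apply Rabs_le; lra.
Qed.

Lemma IY p q x0 y0 n : valid_mem1 p -> valid_mem1 q ->
  Rabs (Ssum p q x0 y0 n CC * q CC + Ssum p q x0 y0 n CD * q DC
        + Ssum p q x0 y0 n DC * q CD + Ssum p q x0 y0 n DD * q DD
        - (Ssum p q x0 y0 n CC + Ssum p q x0 y0 n DC)) <= 1.
Proof.
  intros Hp Hq. pose proof (telY p q x0 y0 n). unfold sum4 in H. simpl swap in H.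
  rewrite H. pose proof (two_bnd p q x0 y0 (S n) CC DC Hp Hq ltac:(discriminate)).
  pose proof (two_bnd p q x0 y0 0 CC DC Hp Hq ltac:(discriminate)).
  apply Rabs_le; lra.
Qed.

Lemma IT_aux p q x0 y0 n s t : valid_mem1 p -> valid_mem1 q ->
  trans p q s t * Ssum p q x0 y0 n s
  <= Ssum p q x0 y0 n t + trans p q s t * Defs.dist p q x0 y0 n s.
Proof.
  intros Hp Hq. unfold Ssum. induction n.
  - change (sum_f_R0 ?f O) with (f O). cbv beta.
    pose proof (proj1 (dist_ok p q x0 y0 0 Hp Hq) t). lra.
  - change (sum_f_R0 ?f (S n)) with (sum_f_R0 f n + f (S n)).
    pose proof (dist_step_ge p q x0 y0 n s t Hp Hq). lra.
Qed.

Lemma IT p q x0 y0 n s t : valid_mem1 p -> valid_mem1 q ->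
  trans p q s t * Ssum p q x0 y0 n s <= Ssum p q x0 y0 n t + 1.
Proof.
  intros Hp Hq. pose proof (IT_aux p q x0 y0 n s t Hp Hq).
  pose proof (trans_bnd p q s t Hp Hq).
  destruct (dist_ok p q x0 y0 n Hp Hq) as [H1 H2]. unfold sum4 in H2.
  pose proof (H1 CC). pose proof (H1 CD). pose proof (H1 DC). pose proof (H1 DD).
  pose proof (H1 s).
  assert (Defs.dist p q x0 y0 n s <= 1) by (destruct s; lra).
  assert (trans p q s t * Defs.dist p q x0 y0 n s <= 1).
  { replace 1 with (1*1) by ring. apply Rmult_le_compat; lra. }
  lra.
Qed.

Lemma cesaro_eq Rr Pp X Y n :
  cesaro Rr Pp X Y n =
  (Rr * Ssum (vec X) (vec Y) (init X) (init Y) n CC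
   + Ssum (vec X) (vec Y) (init X) (init Y) n DC
   + Pp * Ssum (vec X) (vec Y) (init X) (init Y) n DD) / INR (S n).
Proof.
  unfold cesaro. f_equal. unfold Ssum, round_payoff. induction n.
  - simpl. unfold sum4; simpl; ring.
  - change (sum_f_R0 ?f (S n)) with (sum_f_R0 f n + f (S n)).
    rewrite IHn. unfold sum4; simpl; ring.
Qed.

Lemma mul_le_div x y z : 0 < y -> x * y <= z -> x <= z / y.
Proof.
  intros Hy H. unfold Rdiv. apply Rmult_le_reg_r with y; auto.
  rewrite Rmult_assoc, Rinv_l by lra. lra.
Qed.

Lemma abs1 x : Rabs x <= 1 -> -1 <= x <= 1.
Proof. unfold Rabs; destruct Rcase_abs; lra. Qed.

Lemma ces_bnd Rr Pp X Y n : PD_params Rr Pp -> valid_mem1 (vec X) -> valid_mem1 (vec Y) ->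
  0 <= cesaro Rr Pp X Y n <= 1.
Proof.
  intros [H1 [H2 [H3 H4]]] Hp Hq. rewrite cesaro_eq.
  pose proof (Ssum_total (vec X) (vec Y) (init X) (init Y) n Hp Hq).
  pose proof (Ssum_nonneg (vec X) (vec Y) (init X) (init Y) n CC Hp Hq).
  pose proof (Ssum_nonneg (vec X) (vec Y) (init X) (init Y) n CD Hp Hq).
  pose proof (Ssum_nonneg (vec X) (vec Y) (init X) (init Y) n DC Hp Hq).
  pose proof (Ssum_nonneg (vec X) (vec Y) (init X) (init Y) n DD Hp Hq).
  set (a := Ssum _ _ _ _ n CC) in *. set (b := Ssum _ _ _ _ n CD) in *.
  set (c := Ssum _ _ _ _ n DC) in *. set (d := Ssum _ _ _ _ n DD) in *.
  assert (HN : 0 < INR (S n)) by (apply lt_0_INR; lia).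
  split.
  - apply Rmult_le_pos; [|left; apply Rinv_0_lt_compat; auto]. nra.
  - apply Rmult_le_reg_r with (INR (S n)); auto.
    unfold Rdiv; rewrite Rmult_assoc, Rinv_l by lra. nra.
Qed.

Lemma upper_from u L K : (forall n, 0 <= u n <= 1) ->
  (forall n, u n * INR (S n) <= L * INR (S n) + K) -> real (Lim_seq u) <= L.
Proof.
  intros Hb H. apply (lim_le u 1 L K Hb). intro n.
  assert (HN : 0 < INR (S n)) by (apply lt_0_INR; lia).
  specialize (H n). apply Rmult_le_reg_r with (INR (S n)); auto.
  replace ((L + K / INR (S n)) * INR (S n)) with (L * INR (S n) + K) by (field; lra). auto.
Qed.

Lemma lower_from u L K : (forall n, 0 <= u n <= 1) ->
  (forall n, L * INR (S n) - K <= u n * INR (S n)) -> L <= real (Lim_seq u).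
Proof.
  intros Hb H. apply (lim_ge u 1 L K Hb). intro n.
  assert (HN : 0 < INR (S n)) by (apply lt_0_INR; lia).
  specialize (H n). apply Rmult_le_reg_r with (INR (S n)); auto.
  replace ((L - K / INR (S n)) * INR (S n)) with (L * INR (S n) - K) by (field; lra). auto.
Qed.

Lemma ces_mul Rr Pp X Y n : cesaro Rr Pp X Y n * INR (S n) =
  Rr * Ssum (vec X) (vec Y) (init X) (init Y) n CC
   + Ssum (vec X) (vec Y) (init X) (init Y) n DC
   + Pp * Ssum (vec X) (vec Y) (init X) (init Y) n DD.
Proof.
  rewrite cesaro_eq. assert (HN : 0 < INR (S n)) by (apply lt_0_INR; lia). field; lra.
Qed.

Ltac setup X Y n Hp Hq :=
  pose proof (Ssum_total (vec X) (vec Y) (init X) (init Y) n Hp Hq);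
  pose proof (Ssum_nonneg (vec X) (vec Y) (init X) (init Y) n CC Hp Hq);
  pose proof (Ssum_nonneg (vec X) (vec Y) (init X) (init Y) n CD Hp Hq);
  pose proof (Ssum_nonneg (vec X) (vec Y) (init X) (init Y) n DC Hp Hq);
  pose proof (Ssum_nonneg (vec X) (vec Y) (init X) (init Y) n DD Hp Hq);
  pose proof (abs1 _ (IX (vec X) (vec Y) (init X) (init Y) n Hp Hq));
  pose proof (abs1 _ (IY (vec X) (vec Y) (init X) (init Y) n Hp Hq));
  pose proof (IT (vec X) (vec Y) (init X) (init Y) n DD CD Hp Hq);
  pose proof (IT (vec X) (vec Y) (init X) (init Y) n CC DC Hp Hq);
  rewrite ces_mul;
  set (a := Ssum _ _ _ _ n CC) in *; set (b := Ssum _ _ _ _ n CD) in *;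
  set (c := Ssum _ _ _ _ n DC) in *; set (d := Ssum _ _ _ _ n DD) in *;
  set (N := INR (S n)) in *;
  unfold trans in *; cbn [prob_play own_play other_play swap] in *.

Lemma dd_bound (q4 p4 b N a c d : R) : 0 <= q4 -> p4 = 0 -> 0 <= a -> 0 <= c ->
  a + b + c + d = N -> q4 * (1 - p4) * d <= b + 1 -> d <= (N + 1) / (1 + q4).
Proof.
  intros. subst p4. apply mul_le_div. lra. nra.
Qed.

Lemma div_le_self x q : 0 <= x -> 0 <= q -> x / (1 + q) <= x.
Proof.
  intros. assert (/ (1 + q) <= 1).
  { apply Rmult_le_reg_r with (1+q); [lra|]. rewrite Rinv_l; lra. }
  unfold Rdiv. rewrite <- (Rmult_1_r x) at 2. apply Rmult_le_compat_l; lra.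
Qed.

Lemma div_lt_self x q : 0 < x -> 0 < q -> x / (1 + q) < x.
Proof.
  intros. apply Rmult_lt_reg_r with (1+q); [lra|].
  unfold Rdiv. rewrite Rmult_assoc, Rinv_l by lra. nra.
Qed.

Lemma up_a Rr Pp X Y : PD_params Rr Pp -> valid_mem1 (vec X) -> valid_mem1 (vec Y) ->
  vec Y CC < 1 -> vec Y CD < 1 -> vec Y DC = 0 -> vec Y DD = 0 -> 0 < vec X DD ->
  real (Lim_seq (cesaro Rr Pp X Y)) <= Pp / (1 + vec X DD).
Proof.
  intros HPD Hp Hq H1 H2 H3 H4 H5. pose proof HPD as [P1 [P2 [P3 P4]]].
  apply (upper_from _ _ (Rr / (1 - vec Y CC) + 1 / (1 - vec Y CD) + Pp)).
  intro n; apply ces_bnd; auto.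
  intro n. setup X Y n Hp Hq.
  rewrite H3, H4 in *.
  assert (Ha : a <= 1 / (1 - vec Y CC)) by (apply mul_le_div; nra).
  assert (Hc : c <= 1 / (1 - vec Y CD)).
  { apply mul_le_div. lra. assert (0 <= a * (1 - vec Y CC)) by (apply Rmult_le_pos; lra). nra. }
  assert (Hd : d <= (N + 1) / (1 + vec X DD)) by (apply (dd_bound (vec X DD) 0 b N a c d); lra).
  assert (Hx : Rr * a <= Rr * (1 / (1 - vec Y CC))) by (apply Rmult_le_compat_l; lra).
  assert (Hy : Pp * d <= Pp * ((N + 1) / (1 + vec X DD))) by (apply Rmult_le_compat_l; lra).
  assert (Hz : Pp / (1 + vec X DD) <= Pp).
  { apply div_le_self; lra. }
  replace (Pp * ((N + 1) / (1 + vec X DD))) with (Pp / (1 + vec X DD) * N + Pp / (1 + vec X DD)) in Hy by (field; lra).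
  lra.
Qed.

Lemma low_ab Rr Pp X : PD_params Rr Pp -> valid_mem1 (vec X) ->
  vec X CD < 1 -> vec X DC = 0 -> vec X DD = 0 ->
  Pp <= real (Lim_seq (cesaro Rr Pp X X)).
Proof.
  intros HPD Hp H2 H3 H4. pose proof HPD as [P1 [P2 [P3 P4]]].
  apply (lower_from _ _ (Pp / (1 - vec X CD))).
  intro n; apply ces_bnd; auto.
  intro n. setup X X n Hp Hp.
  rewrite H3, H4 in *.
  assert (Hb : b <= 1 / (1 - vec X CD)).
  { apply mul_le_div. lra. assert (0 <= a * (1 - vec X CC)) by (apply Rmult_le_pos; pose proof (Hp CC); lra). nra. }
  assert (Hx : Pp * b <= Pp * (1 / (1 - vec X CD))) by (apply Rmult_le_compat_l; lra).
  replace (Pp * (1 / (1 - vec X CD))) with (Pp / (1 - vec X CD)) in Hx by (field; lra).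
  assert (0 <= (Rr - Pp) * a) by (apply Rmult_le_pos; lra).
  assert (0 <= (1 - Pp) * c) by (apply Rmult_le_pos; lra).
  nra.
Qed.

Lemma up_b Rr Pp X Y : PD_params Rr Pp -> valid_mem1 (vec X) -> valid_mem1 (vec Y) ->
  vec Y CC = 1 -> vec Y CD < 1 -> vec Y DC = 0 -> vec Y DD = 0 -> 0 < vec X DD ->
  vec X CC < 1 ->
  real (Lim_seq (cesaro Rr Pp X Y)) <= Pp / (1 + vec X DD).
Proof.
  intros HPD Hp Hq H1 H2 H3 H4 H5 H6. pose proof HPD as [P1 [P2 [P3 P4]]].
  apply (upper_from _ _ (Rr * ((1 / (1 - vec Y CD) + 1) / (1 - vec X CC)) + 1 / (1 - vec Y CD) + Pp)).
  intro n; apply ces_bnd; auto.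
  intro n. setup X Y n Hp Hq.
  rewrite H1, H3, H4 in *.
  assert (Hc : c <= 1 / (1 - vec Y CD)) by (apply mul_le_div; nra).
  assert (Ha : a <= (1 / (1 - vec Y CD) + 1) / (1 - vec X CC)) by (apply mul_le_div; nra).
  assert (Hd : d <= (N + 1) / (1 + vec X DD)) by (apply (dd_bound (vec X DD) 0 b N a c d); lra).
  assert (Hx : Rr * a <= Rr * ((1 / (1 - vec Y CD) + 1) / (1 - vec X CC))) by (apply Rmult_le_compat_l; lra).
  assert (Hy : Pp * d <= Pp * ((N + 1) / (1 + vec X DD))) by (apply Rmult_le_compat_l; lra).
  assert (Hz : Pp / (1 + vec X DD) <= Pp).
  { apply div_le_self; lra. }
  replace (Pp * ((N + 1) / (1 + vec X DD))) with (Pp / (1 + vec X DD) * N + Pp / (1 + vec X DD)) in Hy by (field; lra).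
  lra.
Qed.

Lemma zd_facts Rr Pp p : PD_params Rr Pp -> Pp < 1/2 -> valid_mem1 p -> firm p ->
  nonexc_ZD_neg_alphabar Rr Pp p ->
  exists al be, al < 0 /\ 0 < al - be /\ al + be < 0 /\
    p CC = 1 + (al+be)*(Rr - Pp) /\ p CD = 1 + be - (al+be)*Pp /\
    p DC = al - (al+be)*Pp /\ p DD = 0.
Proof.
  intros [P1 [P2 [P3 P4]]] Ph Hv Hf [al [be [g [HD [Hg Ha]]]]].
  unfold firm in Hf.
  pose proof (HD CC) as E1. pose proof (HD CD) as E2. pose proof (HD DC) as E3. pose proof (HD DD) as E4.
  unfold SX, SY, one4, e23 in E1, E2, E3, E4.
  assert (Hal : al < 0).
  { unfold Rdiv in Ha. pose proof (Rinv_0_lt_compat g Hg). nra. }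
  assert (Hgv : g = - (al + be) * Pp) by lra.
  assert (Hab : al + be < 0) by nra.
  pose proof (Hv DC).
  exists al, be. split; [auto|]. split.
  - assert (0 <= al * (1 - Pp) - be * Pp) by nra.
    assert (0 < (al - be) * Pp) by nra. nra.
  - split; [auto|]. split; [nra|]. split; [nra|]. split; [nra|]. auto.
Qed.

Lemma low_c Rr Pp X al be : PD_params Rr Pp -> Pp < 1/2 -> valid_mem1 (vec X) ->
  al < 0 -> 0 < al - be -> al + be < 0 ->
  vec X CC = 1 + (al+be)*(Rr - Pp) -> vec X CD = 1 + be - (al+be)*Pp ->
  vec X DC = al - (al+be)*Pp -> vec X DD = 0 ->
  Pp <= real (Lim_seq (cesaro Rr Pp X X)).
Proof.
  intros HPD Ph Hp Hal Hm Hab H1 H2 H3 H4. pose proof HPD as [P1 [P2 [P3 P4]]].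
  set (lam := - (al + be) * (1 - 2 * Pp)).
  assert (Hl : 0 < lam) by (unfold lam; nra).
  apply (lower_from _ _ (2 / lam)).
  intro n; apply ces_bnd; auto.
  intro n. setup X X n Hp Hp.
  rewrite H1, H2, H3, H4 in *.
  assert (Hid : lam * (b + c) + 2 * (- (al+be)) * (Rr - Pp) * a =
     - ((a * (1 + (al + be) * (Rr - Pp)) + b * (1 + be - (al + be) * Pp) +
      c * (al - (al + be) * Pp) + d * 0 - (a + b)) +
      (a * (1 + (al + be) * (Rr - Pp)) + b * (al - (al + be) * Pp) +
      c * (1 + be - (al + be) * Pp) + d * 0 - (a + c)))) by (unfold lam; ring).
  assert (0 <= 2 * (- (al+be)) * (Rr - Pp) * a).
  { apply Rmult_le_pos; [|lra]. apply Rmult_le_pos; lra. }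
  assert (Hbc : b + c <= 2 / lam) by (apply mul_le_div; lra).
  assert (0 <= (Rr - Pp) * a) by (apply Rmult_le_pos; lra).
  assert (0 <= (1 - Pp) * c) by (apply Rmult_le_pos; lra).
  assert (Pp * b <= b) by nra.
  assert (Pp * N = Pp * a + Pp * b + Pp * c + Pp * d) by (rewrite <- H; ring).
  nra.
Qed.

Lemma up_c Rr Pp X Y al be : PD_params Rr Pp -> Pp < 1/2 ->
  valid_mem1 (vec X) -> valid_mem1 (vec Y) ->
  al < 0 -> 0 < al - be -> al + be < 0 ->
  vec Y CC = 1 + (al+be)*(Rr - Pp) -> vec Y CD = 1 + be - (al+be)*Pp ->
  vec Y DC = al - (al+be)*Pp -> vec Y DD = 0 -> 0 < vec X DD ->
  real (Lim_seq (cesaro Rr Pp X Y)) <=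
    Pp - (- al * (1 - 2 * Pp)) * vec X DD / ((1 + vec X DD) * (al - be)).
Proof.
  intros HPD Ph Hp Hq Hal Hm Hab H1 H2 H3 H4 H5. pose proof HPD as [P1 [P2 [P3 P4]]].
  set (kap := - al * (1 - 2 * Pp)). set (m := al - be). set (q4 := vec X DD).
  assert (Hk : 0 < kap) by (unfold kap; nra).
  apply (upper_from _ _ ((1 + kap / (1 + q4)) / m)).
  intro n; apply ces_bnd; auto.
  intro n. setup X Y n Hp Hq.
  rewrite H1, H2, H3, H4 in *.
  assert (Hid : m * (Pp * N - (Rr * a + c + Pp * d)) =
     (a * (1 + (al + be) * (Rr - Pp)) + b * (al - (al + be) * Pp) +
      c * (1 + be - (al + be) * Pp) + d * 0 - (a + c))
     + kap * (N - d) + (- al) * (2 * Rr - 1) * a) by (rewrite <- H; unfold m, kap; ring).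
  assert (0 <= (- al) * (2 * Rr - 1) * a).
  { apply Rmult_le_pos; [|lra]. apply Rmult_le_pos; lra. }
  assert (Hd : d <= (N + 1) / (1 + q4)) by (apply (dd_bound q4 0 b N a c d); unfold q4 in *; lra).
  assert (Hkd : kap * d <= kap * ((N + 1) / (1 + q4))) by (apply Rmult_le_compat_l; lra).
  apply Rmult_le_reg_l with m. unfold m; lra.
  replace (m * ((Pp - kap * q4 / ((1 + q4) * m)) * N + (1 + kap / (1 + q4)) / m))
    with (m * Pp * N - kap * q4 * N / (1 + q4) + 1 + kap / (1 + q4)) by (field; unfold m, q4 in *; repeat split; lra).
  replace (kap * ((N + 1) / (1 + q4))) with (kap * N - kap * q4 * N / (1 + q4) + kap / (1 + q4)) in Hkd by (field; unfold m, q4 in *; repeat split; lra).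
  nra.
Qed.

Lemma q4_pos p : valid_mem1 p -> ~ firm p -> 0 < p DD.
Proof. intros Hv Hf. unfold firm in Hf. pose proof (Hv DD). destruct H as [[H|H] _]; auto. congruence. Qed.

Theorem theorem4p9 (Rr Pp : R) (hPD : PD_params Rr Pp) :
  (* (a) *)
  (forall (I : Type) (st : I -> strategy) (istar : I) (p1 p2 : R),
     finite_index I ->
     (forall i, valid_mem1 (vec (st i))) ->
     vec (st istar) CC = p1 -> vec (st istar) CD = p2 ->
     vec (st istar) DC = 0 -> vec (st istar) DD = 0 ->
     p1 < 1 -> p2 < 1 ->
     (forall j, j <> istar -> ~ firm (vec (st j))) ->
     ESS (Amat Rr Pp st) istar)
  /\
  (* (b) *)
  (forall (I : Type) (st : I -> strategy) (istar : I) (p2 : R),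
     finite_index I ->
     (forall i, valid_mem1 (vec (st i))) ->
     vec (st istar) CC = 1 -> vec (st istar) CD = p2 ->
     vec (st istar) DC = 0 -> vec (st istar) DD = 0 ->
     p2 < 1 ->
     (forall j, j <> istar -> ~ agreeable (vec (st j)) /\ ~ firm (vec (st j))) ->
     ESS (Amat Rr Pp st) istar)
  /\
  (* (c) *)
  (Pp < 1 / 2 ->
   forall (I : Type) (st : I -> strategy) (istar : I),
     finite_index I ->
     (forall i, valid_mem1 (vec (st i))) ->
     firm (vec (st istar)) ->
     nonexc_ZD_neg_alphabar Rr Pp (vec (st istar)) ->
     (forall j, j <> istar -> ~ firm (vec (st j))) ->
     ESS (Amat Rr Pp st) istar).
Proof.
  pose proof hPD as [P1 [P2 [P3 P4]]].
  split; [|split].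
  - intros I st istar p1 p2 _ Hv HCC HCD HDC HDD Hp1 Hp2 Hnf j Hj.
    unfold Amat, longrun.
    pose proof (q4_pos _ (Hv j) (Hnf j Hj)) as Hq.
    apply Rlt_le_trans with Pp.
    + eapply Rle_lt_trans.
      apply up_a; auto; lra.
      apply div_lt_self; auto.
    + apply low_ab; auto; lra.
  - intros I st istar p2 _ Hv HCC HCD HDC HDD Hp2 Hnf j Hj.
    unfold Amat, longrun.
    destruct (Hnf j Hj) as [Hna Hnf'].
    pose proof (q4_pos _ (Hv j) Hnf') as Hq.
    assert (Hq1 : vec (st j) CC < 1).
    { unfold agreeable in Hna. pose proof (Hv j CC). destruct H as [_ [H|H]]; auto. congruence. }
    apply Rlt_le_trans with Pp.
    + eapply Rle_lt_trans.
      apply up_b; auto; lra.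
      apply div_lt_self; auto.
    + apply low_ab; auto; lra.
  - intros Ph I st istar _ Hv Hf Hzd Hnf j Hj.
    unfold Amat, longrun.
    pose proof (q4_pos _ (Hv j) (Hnf j Hj)) as Hq.
    destruct (zd_facts Rr Pp _ hPD Ph (Hv istar) Hf Hzd)
      as [al [be [Hal [Hm [Hab [E1 [E2 [E3 E4]]]]]]]].
    apply Rlt_le_trans with Pp.
    + eapply Rle_lt_trans.
      apply (up_c Rr Pp (st j) (st istar) al be); auto.
      assert (0 < - al * (1 - 2 * Pp) * vec (st j) DD / ((1 + vec (st j) DD) * (al - be))).
      { apply Rdiv_lt_0_compat. apply Rmult_lt_0_compat; [nra|lra].
        apply Rmult_lt_0_compat; lra. }
      lra.
    + apply (low_c Rr Pp (st istar) al be); auto.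
Qed.
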